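(* Every geometric centrality has ties on every graph that is not geometrically rigid. Moreover, there exists a geometric centrality $f$ such that for every geometrically rigid graph $G$, $f$ has no ties on $G$.
   Context: A graph $G$ is a finite directed graph with node set $V_G=\{0,\dots,n-1\}$ and arc set $E_G\subseteq V_G\times V_G$. A path of length $k$ from $x$ to $y$ is a sequence $x=x_0,\dots,x_k=y$ with $(x_i,x_{i+1})\in E_G$; $d_G(x,y)$ is the length of a shortest such path, or $\infty$ if none exists. An isomorphism $\varphi:G\to H$ is a bijection with $x\to_G y$ iff $\varphi(x)\to_H\varphi(y)$. A centrality $f$ assigns to each graph $G$ a map $f_G:V_G\to\mathbb{R}$ with $f_G(x)=f_H(\varphi(x))$ for every isomorphism $\varphi:G\to H$. $f$ has no ties on $G$ if $f_G(x)\ne f_G(y)$ for all distinct $x,y$. For a node $i$, the distance-count function is $c_{G,i}:\mathbb{N}\to\mathbb{N}$, $c_{G,i}(k)=|\{j\in V_G: d_G(j,i)=k\}|$. The distance-count matrix $C_G\in\mathbb{R}^{n\times n}$ has entries $(C_G)_{i,k}=c_{G,i}(k)$ for $i,k\in\{0,\dots,n-1\}$. $G$ is geometrically rigid if the rows of $C_G$ are pairwise distinct. A centrality $f$ respects a permutation $\pi$ of $V_G$ on $G$ if $f_G(\pi(i))\ge f_G(\pi(i+1))$ for all $i<n-1$; two centralities are equivalent if on every graph they respect exactly the same permutations. A centrality $f$ is strictly geometric if for all graphs $G,G'$ and nodes $i\in V_G$, $i'\in V_{G'}$, $c_{G,i}=c_{G',i'}$ implies $f_G(i)=f_{G'}(i')$;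 it is geometric if it is equivalent to a strictly geometric centrality. *)

(* Defs.v *)
From Stdlib Require Import Reals.
From mathcomp Require Import all_boot all_fingroup.
Set Implicit Arguments. Unset Strict Implicit. Unset Printing Implicit Defensive.

Definition graph (n : nat) := {set 'I_n * 'I_n}.

Definition arc n (G : graph n) : rel 'I_n := fun x y => (x, y) \in G.

Definition walkb n (G : graph n) (x y : 'I_n) (k : nat) : bool :=
  [exists p : k.-tuple 'I_n, path (arc G) x p && (last x p == y)].

Definition distb n (G : graph n) (x y : 'I_n) (k : nat) : bool :=
  walkb G x y k && [forall m : 'I_k, ~~ walkb G x y m].

Definition dcount n (G : graph n) (i : 'I_n) (k : nat) : nat :=
  #|[set j | distb G j i k]|.

Definition dcmx n (G : graph n) (i k : 'I_n) : nat := dcount G i k.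

Definition geom_rigid n (G : graph n) : Prop :=
  forall i j : 'I_n, i <> j -> exists k : 'I_n, dcmx G i k <> dcmx G j k.

Definition centrality_fun := forall n, graph n -> 'I_n -> R.

Definition graph_iso n (G H : graph n) (phi : 'I_n -> 'I_n) : Prop :=
  bijective phi /\ forall x y, (x, y) \in G <-> (phi x, phi y) \in H.

Definition is_centrality (f : centrality_fun) : Prop :=
  forall n (G H : graph n) (phi : 'I_n -> 'I_n),
    graph_iso G H phi -> forall x, f n G x = f n H (phi x).

Definition no_ties (f : centrality_fun) n (G : graph n) : Prop :=
  forall x y : 'I_n, x <> y -> f n G x <> f n G y.

Definition respects (f : centrality_fun) n (G : graph n) (pi : {perm 'I_n}) : Prop :=
  forall i j : 'I_n, nat_of_ord j = (nat_of_ord i).+1 ->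
    Rle (f n G (pi j)) (f n G (pi i)).

Definition equivalent (f g : centrality_fun) : Prop :=
  forall n (G : graph n) (pi : {perm 'I_n}), respects f G pi <-> respects g G pi.

Definition strictly_geometric (f : centrality_fun) : Prop :=
  forall n n' (G : graph n) (G' : graph n') (i : 'I_n) (i' : 'I_n'),
    (forall k, dcount G i k = dcount G' i' k) -> f n G i = f n' G' i'.

Definition geometric (f : centrality_fun) : Prop :=
  exists g, is_centrality g /\ strictly_geometric g /\ equivalent f g.

(* Main.v *)
Require Import Defs.
From Stdlib Require Import Reals Classical.
From mathcomp Require Import all_boot all_fingroup.

Set Implicit Arguments. Unset Strict Implicit. Unset Printing Implicit Defensive.

Lemma dist_big n (G : graph n) j i k : n <= k -> distb G j i k = false.
Proof.
move=> nk; apply/negbTE/negP; rewrite /distb /walkb => /andP[H1 H2].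
move/existsP: H1 => [p /andP[pp /eqP]].
have H := fintype.forallP H2.
case: (shortenP pp) => p' pp' up' _ pl.
have h1 : #|j :: p'| = size (j :: p') by apply/card_uniqP.
have h2 := max_card (mem (j :: p')).
rewrite card_ord h1 /= in h2.
have sz : size p' < k by apply: leq_trans h2 nk.
move/negP: (H (Ordinal sz)); apply; apply/existsP; exists (in_tuple p').
by rewrite /= pp' pl eqxx.
Qed.

Lemma dcount_big n (G : graph n) i k : n <= k -> dcount G i k = 0.
Proof.
move=> nk; rewrite /dcount; apply/eqP; rewrite cards_eq0; apply/eqP/setP => j.
by rewrite !inE dist_big.
Qed.

Lemma walkb_iso n (G H : graph n) phi : graph_iso G H phi ->
  forall x y k, walkb G x y k = walkb H (phi x) (phi y) k.
Proof.
case=> [[psi c1 c2] E] x y k; apply/existsP/existsP.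
- case=> p /andP[pp /eqP pl]; exists (map_tuple phi p).
  rewrite /= path_map last_map pl eqxx andbT.
  have e : relpre phi (Defs.arc H) =2 Defs.arc G.
    move=> a b /=; rewrite /Defs.arc.
    by apply/idP/idP => h; [apply/E | apply/E].
  by rewrite (eq_path e).
- case=> p /andP[pp /eqP pl]; exists (map_tuple psi p).
  rewrite /= -{1}(c1 x) path_map -{2}(c1 x) last_map pl c1 eqxx andbT.
  have e : relpre psi (Defs.arc G) =2 Defs.arc H.
    move=> a b /=; rewrite /Defs.arc.
    apply/idP/idP => h.
    + by move/E: h; rewrite !c2.
    + by apply/E; rewrite !c2.
  by rewrite (eq_path e).
Qed.

Lemma distb_iso n (G H : graph n) phi : graph_iso G H phi ->
  forall x y k, distb G x y k = distb H (phi x) (phi y) k.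
Proof.
move=> iso x y k; rewrite /distb (walkb_iso iso); congr andb.
by apply: eq_forallb => m; rewrite (walkb_iso iso).
Qed.

Lemma dcount_iso n (G H : graph n) phi : graph_iso G H phi ->
  forall x k, dcount G x k = dcount H (phi x) k.
Proof.
move=> iso x k; have [[psi c1 c2] _] := iso.
have injphi : injective phi by apply: can_inj c1.
rewrite /dcount -(@card_preimset _ phi [set j | distb H j (phi x) k] injphi).
by apply: eq_card => j; rewrite !inE (distb_iso iso).
Qed.

Definition enc (c : nat -> nat) (N : nat) : nat :=
  pickle [seq (k, c k) | k <- [seq k <- iota 0 N | c k != 0]].

Lemma enc_ext c N M : N <= M -> (forall k, N <= k -> c k = 0) -> enc c M = enc c N.
Proof.
move=> NM Hz; rewrite /enc -(subnKC NM) iotaD filter_cat add0n.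
rewrite (@eq_in_filter _ _ pred0 (iota N (M - N))); first by rewrite filter_pred0 cats0.
by move=> k; rewrite mem_iota => /andP[h _] /=; rewrite Hz.
Qed.

Lemma enc_eq c1 c2 N : c1 =1 c2 -> enc c1 N = enc c2 N.
Proof.
move=> E; rewrite /enc.
have -> : [seq k <- iota 0 N | c1 k != 0] = [seq k <- iota 0 N | c2 k != 0].
  by apply: eq_filter => k; rewrite E.
by congr pickle; apply: eq_map => k; rewrite E.
Qed.

Lemma enc_mem c1 c2 N k : k < N -> c2 k != 0 ->
  [seq (k, c1 k) | k <- [seq k <- iota 0 N | c1 k != 0]] =
  [seq (k, c2 k) | k <- [seq k <- iota 0 N | c2 k != 0]] -> c1 k = c2 k.
Proof.
move=> kN h2 E.
have : (k, c2 k) \in [seq (k, c2 k) | k <- [seq k <- iota 0 N | c2 k != 0]].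
  by apply: map_f; rewrite mem_filter mem_iota h2 kN.
by rewrite -E => /mapP[k' _ [-> ->]].
Qed.

Lemma enc_inj c1 c2 N : enc c1 N = enc c2 N -> forall k, k < N -> c1 k = c2 k.
Proof.
move/(pcan_inj pickleK) => E k kN.
case: (c2 k =P 0) => h2.
  case: (c1 k =P 0) => h1; first by rewrite h1 h2.
  by symmetry; apply: (enc_mem kN _ (esym E)); apply/eqP.
by apply: (enc_mem kN _ E); apply/eqP.
Qed.

Definition fenc : centrality_fun := fun n G i => INR (enc (dcount G i) n).

Definition rlt (a b : R) : bool := if Rlt_dec a b then true else false.
Lemma rltP a b : reflect (Rlt a b) (rlt a b).
Proof. by rewrite /rlt; case: Rlt_dec => h; constructor. Qed.

Theorem theorem2 :
  (forall f : centrality_fun, is_centrality f -> geometric f ->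
     forall n (G : graph n), ~ geom_rigid G -> ~ no_ties f G) /\
  (exists f : centrality_fun, is_centrality f /\ geometric f /\
     forall n (G : graph n), geom_rigid G -> no_ties f G).
Proof.
split; last first.
  have cent : is_centrality fenc.
    move=> n G H phi iso x; rewrite /fenc; congr INR.
    by apply: enc_eq => k; rewrite (dcount_iso iso).
  exists fenc; split=> //; split.
    exists fenc; split=> //; split=> //.
    move=> n n' G G' i i' E; rewrite /fenc (enc_eq n E); congr INR.
    rewrite -(@enc_ext _ n (maxn n n')) ?leq_maxl //; last first.
      by move=> k nk; rewrite -E dcount_big.
    rewrite (@enc_ext _ n' (maxn n n')) ?leq_maxr //.
    by move=> k nk; rewrite dcount_big.
  move=> n G rig x y xy /INR_eq h.
  have [k hk] := rig x y xy; apply: hk.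
  exact: (enc_inj h (ltn_ord k)).
move=> f fc [g [gc [gs eqv]]] n G nrig nt.
have [i [j [ij rowij]]] : exists i j : 'I_n, i <> j /\
    forall k : 'I_n, dcmx G i k = dcmx G j k.
  apply: NNPP => hn; apply: nrig => i j ij; apply: NNPP => hk; apply: hn.
  exists i, j; split=> // k; apply: NNPP => hk2; apply: hk; by exists k.
have gij : g n G i = g n G j.
  apply: gs => k; case: (ltnP k n) => kn; first exact: (rowij (Ordinal kn)).
  by rewrite !dcount_big.
pose A x := [set y | rlt (f n G x) (f n G y)].
have rk_lt x : #|A x| < n.
  suff : #|A x| < #|[set: 'I_n]| by rewrite cardsT card_ord.
  apply: proper_card; rewrite properT.
  apply/eqP => e; have : x \in A x by rewrite e inE.
  by rewrite inE => /rltP /Rlt_irrefl.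
pose rko x := Ordinal (rk_lt x).
have rk_mono x y : Rle (f n G x) (f n G y) -> #|A y| <= #|A x|.
  move=> h; apply: subset_leq_card; apply/subsetP => z; rewrite !inE.
  move/rltP => h2; apply/rltP; exact: Rle_lt_trans h h2.
have rk_f x y : #|A x| < #|A y| -> Rlt (f n G y) (f n G x).
  move=> h; case: (Rlt_le_dec (f n G y) (f n G x)) => // /rk_mono.
  by rewrite leqNgt h.
have rk_inj : injective rko.
  move=> x y /(congr1 val) /= e; apply: NNPP => xy.
  have hlt : forall x y, Rlt (f n G x) (f n G y) -> #|A y| < #|A x|.
    move=> a b hab; apply: proper_card; apply/properP; split.
      apply/subsetP => z; rewrite !inE => /rltP h2; apply/rltP.
      exact: Rlt_trans hab h2.
    exists b; rewrite !inE; first by apply/rltP.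
    by apply/negP => /rltP /Rlt_irrefl.
  case: (Rtotal_order (f n G x) (f n G y)) => [h|[h|h]].
  - by move: (hlt _ _ h); rewrite e ltnn.
  - exact: (nt x y xy h).
  - by move: (hlt _ _ h); rewrite e ltnn.
pose s := perm rk_inj.
pose pi := (s^-1)%g.
have rpi p : rko (pi p) = p by rewrite -[rko _]permE permKV.
have pir x : pi (rko x) = x by rewrite -[rko x]permE permK.
have fres : respects f G pi.
  move=> p q e; apply: Rlt_le; apply: rk_f.
  by have := rpi p; have := rpi q => /(congr1 val) /= -> /(congr1 val) /= ->; rewrite e.
have ab : rko i != rko j by apply/eqP => /rk_inj.
clear rowij.
wlog lt_ab : i j ij gij ab / rko i < rko j.
  move=> W; case: (ltngtP (rko i) (rko j)) => h.
  - exact: (W i j).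
  - apply: (W j i) => //; first by move=> e; apply: ij.
    by rewrite eq_sym.
  - by move/eqP: ab; apply; apply: val_inj.
set a := rko i in lt_ab ab *; set b := rko j in lt_ab ab *.
have a1n : (nat_of_ord a).+1 < n by exact: leq_ltn_trans lt_ab (ltn_ord b).
pose a1 := Ordinal a1n.
pose pi' := (tperm a b * pi)%g.
have pi'E x : pi' x = pi (tperm a b x) by rewrite permM.
have gpi x : g n G (pi' x) = g n G (pi x).
  rewrite pi'E; case: tpermP => [->|->|//].
  - by rewrite !pir gij.
  - by rewrite !pir gij.
have gpr : respects g G pi by apply/(eqv n G pi).
have gres : respects g G pi' by move=> p q e; rewrite !gpi; exact: gpr p q e.
have fres' := (proj2 (eqv n G pi')) gres a a1 erefl.
have h1 : pi' a = j by rewrite pi'E tpermL pir.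
have h2 : rko (pi' a1) < b.
  rewrite pi'E rpi; case: tpermP => [e|e|ne1 ne2].
  - by move/(congr1 val): e => /= /eqP; rewrite -[_ == _]/(_.+1 == _) eqn_leq ltnn.
  - done.
  - rewrite ltn_neqAle; apply/andP; split; first by rewrite eq_sym; apply/eqP => e; apply: ne2; apply: val_inj.
    done.
have hlt := rk_f _ _ h2.
rewrite h1 in fres'.
exact: (Rlt_not_le _ _ hlt fres').
Qed.
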